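(* For all integers $n,m$, the multiplication map $\mathcal{L}_n\otimes\mathcal{L}_m\to\mathcal{L}_{n+m}$, $x\otimes y\mapsto xy$, induces an isomorphism of $\mathcal{A}(\mathbb{CP}^1_q)$-bimodules $\mathcal{L}_n\otimes_{\mathcal{A}(\mathbb{CP}^1_q)}\mathcal{L}_m\simeq\mathcal{L}_{n+m}$.
   Context: Fix $0<q<1$. Let $\mathcal{A}(SU_q(2))$ be the unital complex $*$-algebra generated by $a,c$ subject to $ac=qca$, $ac^*=qc^*a$, $cc^*=c^*c$, $a^*a+c^*c=aa^*+q^2cc^*=1$. Let $U_q(su(2))$ be the Hopf $*$-algebra generated by $K,K^{-1},E,F$ with $KK^{-1}=K^{-1}K=1$, $KE=qEK$, $KF=q^{-1}FK$, $EF-FE=(K^2-K^{-2})/(q-q^{-1})$, coproduct $\Delta K=K\otimes K$, $\Delta E=E\otimes K+K^{-1}\otimes E$, $\Delta F=F\otimes K+K^{-1}\otimes F$, counit $\epsilon(K)=1$, $\epsilon(E)=\epsilon(F)=0$. It acts on $\mathcal{A}(SU_q(2))$ from the left, $g\otimes x\mapsto g\triangleright x$, making $\mathcal{A}(SU_q(2))$ a left module algebra ($g\triangleright(xy)=\sum(g_{(1)}\triangleright x)(g_{(2)}\triangleright y)$, $g\triangleright1=\epsilon(g)1$), with $K\triangleright a=q^{-1/2}a$, $K\triangleright c=q^{-1/2}c$, $K\triangleright a^*=q^{1/2}a^*$, $K\triangleright c^*=q^{1/2}c^*$. For $n\in\mathbb{Z}$ let $\mathcal{L}_n=\{x\in\mathcal{A}(SU_q(2)):K\triangleright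 x=q^{n/2}x\}$; then $\mathcal{L}_n\mathcal{L}_m\subseteq\mathcal{L}_{n+m}$. The coordinate algebra of the quantum projective line is $\mathcal{A}(\mathbb{CP}^1_q):=\mathcal{L}_0$ (the $*$-subalgebra generated by $ac^*,ca^*,cc^*$), and each $\mathcal{L}_n$ is an $\mathcal{A}(\mathbb{CP}^1_q)$-bimodule under multiplication. *)

(* Defs.v *)
From HB Require Import structures.
From mathcomp Require Import all_boot all_algebra complex.
From mathcomp Require Import reals.
Set Implicit Arguments. Unset Strict Implicit. Unset Printing Implicit Defensive.
Import GRing.Theory Num.Theory.
Local Open Scope complex_scope.
Local Open Scope ring_scope.

(* The defining relations of A(SU_q(2)), as an algebra on the four generators
   a, c, ad (= a^* ), cd (= c^* ).  The *-ideal generated by the relations is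
   the ideal generated by the relations together with their adjoints; since q
   is real, the adjoints of  ac = q ca  and  ac^* = q c^* a  are
   c^* a^* = q a^* c^*  and  c a^* = q a^* c, while the other three relations
   are self-adjoint. *)
Definition SUq_rel (R : realType) (q : R) (B : algType R[i]) (a c ad cd : B) : Prop :=
  a * c = q%:C *: (c * a) /\
  a * cd = q%:C *: (cd * a) /\
  c * cd = cd * c /\
  ad * a + cd * c = 1 /\
  a * ad + (q%:C ^+ 2) *: (c * cd) = 1 /\
  cd * ad = q%:C *: (ad * cd) /\
  c * ad = q%:C *: (ad * c).

Definition is_ASUq (R : realType) (q : R) (A : algType R[i]) (a c ad cd : A) : Prop :=
  SUq_rel q a c ad cd /\
  forall (B : algType R[i]) (a' c' ad' cd' : B), SUq_rel q a' c' ad' cd' ->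
    exists f : {lrmorphism A -> B},
      [/\ f a = a', f c = c', f ad = ad', f cd = cd' &
        forall g : {lrmorphism A -> B},
          g a = a' -> g c = c' -> g ad = ad' -> g cd = cd' -> forall x, g x = f x].

Definition Lmod (R : realType) (q : R) (A : algType R[i]) (K : A -> A) (n : int)
  : pred A := fun x => K x == ((Num.sqrt q)%:C ^ n) *: x.

(* Tensor products over a subring are not in the library; we use the defining
   universal property.  [mult_tensor_iso Bs Ln Lm Lnm] says that the
   multiplication map  Ln x Lm -> Lnm,  (x,y) |-> xy,  is a universal
   Bs-balanced biadditive map, i.e. that it induces an isomorphism
   Ln (x)_{Bs} Lm  ~=  Lnm  (of abelian groups; this induced map is
   automatically a Bs-bimodule map since b(xy)b' = (bx)(yb')). *)
Definition mult_tensor_iso (A : nzRingType) (Bs Ln Lm Lnm : pred A) : Prop :=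
  forall (W : zmodType) (beta : A -> A -> W),
    (forall x x' y, x \in Ln -> x' \in Ln -> y \in Lm ->
        beta (x + x') y = beta x y + beta x' y) ->
    (forall x y y', x \in Ln -> y \in Lm -> y' \in Lm ->
        beta x (y + y') = beta x y + beta x y') ->
    (forall x b y, x \in Ln -> b \in Bs -> y \in Lm ->
        beta (x * b) y = beta x (b * y)) ->
    exists f : A -> W,
      [/\ forall u v, u \in Lnm -> v \in Lnm -> f (u + v) = f u + f v,
          forall x y, x \in Ln -> y \in Lm -> beta x y = f (x * y) &
          forall g : A -> W,
            (forall u v, u \in Lnm -> v \in Lnm -> g (u + v) = g u + g v) ->
            (forall x y, x \in Ln -> y \in Lm -> beta x y = g (x * y)) ->
            forall u, u \in Lnm -> g u = f u].

(* Main.v *)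
Require Import Defs.
From HB Require Import structures.
From mathcomp Require Import all_boot all_algebra complex.
From mathcomp Require Import reals.
Import GRing.Theory Num.Theory.
Local Open Scope complex_scope.
Local Open Scope ring_scope.

Section Aux.
Set Implicit Arguments. Unset Strict Implicit.
Variables (R : realType) (q : R) (A : algType R[i]) (K : {lrmorphism A -> A}).
Hypothesis hs : (Num.sqrt q)%:C != 0 :> R[i].
Local Notation s := ((Num.sqrt q)%:C : R[i]).
Local Notation L := (Lmod q K).

Lemma KM u v : K (u * v) = K u * K v. Proof. exact: rmorphM. Qed.
Lemma K1 : K 1 = 1. Proof. exact: rmorph1. Qed.
Lemma K0 : K 0 = 0. Proof. exact: raddf0. Qed.
Lemma KD u v : K (u + v) = K u + K v. Proof. exact: raddfD. Qed.
Lemma KZ (k : R[i]) u : K (k *: u) = k *: K u. Proof. exact: linearZ. Qed.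

Lemma memL n x : (x \in L n) = (K x == s ^ n *: x).
Proof. by []. Qed.

Lemma LM n m k x y : x \in L n -> y \in L m -> n + m = k -> x * y \in L k.
Proof.
rewrite !memL => /eqP hx /eqP hy <-; apply/eqP.
by rewrite KM hx hy -scalerAl -scalerAr scalerA expfzDr.
Qed.

Lemma L0 n : (0 : A) \in L n.
Proof. by rewrite memL K0 scaler0. Qed.

Lemma LD n x y : x \in L n -> y \in L n -> x + y \in L n.
Proof.
rewrite !memL => /eqP hx /eqP hy; apply/eqP.
by rewrite KD hx hy scalerDr.
Qed.

Lemma LZ n (k : R[i]) x : x \in L n -> k *: x \in L n.
Proof.
rewrite !memL => /eqP hx; apply/eqP.
by rewrite KZ hx !scalerA mulrC.
Qed.

Lemma Lsum n (r : seq (A * A)) (F : A * A -> A) :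
  (forall p, p \in r -> F p \in L n) -> \sum_(p <- r) F p \in L n.
Proof.
elim: r => [|x r IH] H; first by rewrite big_nil L0.
rewrite big_cons; apply: LD; first by apply: H; rewrite inE eqxx.
by apply: IH => p hp; apply: H; rewrite inE hp orbT.
Qed.

Lemma add_sum (W : zmodType) n (g : A -> W) (r : seq (A * A)) (F : A * A -> A) :
  (forall u v, u \in L n -> v \in L n -> g (u + v) = g u + g v) ->
  (forall p, p \in r -> F p \in L n) ->
  g (\sum_(p <- r) F p) = \sum_(p <- r) g (F p).
Proof.
move=> hg; elim: r => [|x r IH] H.
  rewrite !big_nil; have h := hg 0 0 (L0 n) (L0 n); rewrite addr0 in h.
  have : g 0 + g 0 - g 0 = g 0 - g 0 by rewrite -h.
  by rewrite addrK subrr.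
have Hr : forall p, p \in r -> F p \in L n by move=> p hp; apply: H; rewrite inE hp orbT.
rewrite !big_cons hg ?IH //; first by apply: H; rewrite inE eqxx.
exact: Lsum.
Qed.

Definition Punit n := exists r : seq (A * A),
  (forall p, p \in r -> p.1 \in L n /\ p.2 \in L (- n)) /\
  \sum_(p <- r) p.1 * p.2 = 1.

Lemma Punit0 : Punit 0.
Proof.
exists [:: (1, 1)]; split; last by rewrite big_cons big_nil mulr1 addr0.
move=> p; rewrite inE => /eqP -> /=; rewrite oppr0 memL K1 expr0z scale1r.
by split.
Qed.

Lemma PunitD n k : Punit n -> Punit k -> Punit (n + k).
Proof.
move=> [r [hr sr]] [t [ht st]].
exists [seq (p.1 * p'.1, p'.2 * p.2) | p <- r, p' <- t]; split.
  move=> x /allpairsPdep [p [p' [hp hp' ->]]] /=.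
  have [h1 h2] := hr p hp; have [h1' h2'] := ht p' hp'.
  split; first exact: LM h1 h1' _.
  by apply: LM h2' h2 _; rewrite opprD addrC.
rewrite big_allpairs_dep /= -sr; apply: eq_bigr => p _.
transitivity (p.1 * (\sum_(p' <- t) p'.1 * p'.2) * p.2); last by rewrite st mulr1.
rewrite mulr_sumr mulr_suml; apply: eq_bigr => p' _.
by rewrite !mulrA.
Qed.

Lemma PunitN (k : nat) : Punit (- 1) -> Punit (- (k%:Z)).
Proof.
move=> h; elim: k => [|k IH]; first by rewrite oppr0; exact: Punit0.
have -> : - (k.+1%:Z) = - (k%:Z) + (- 1) by rewrite -addn1 PoszD opprD.
exact: PunitD.
Qed.

Lemma PunitP (k : nat) : Punit 1 -> Punit (k%:Z).
Proof.
move=> h; elim: k => [|k IH]; first exact: Punit0.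
have -> : (k.+1%:Z) = k%:Z + 1 by rewrite -addn1 PoszD.
exact: PunitD.
Qed.

Lemma Punit_all n : Punit 1 -> Punit (- 1) -> Punit n.
Proof.
move=> h1 h2; case: n => k; first exact: PunitP.
rewrite NegzE; exact: PunitN.
Qed.

End Aux.

Theorem proposition3p1 (R : realType) (q : R) (hq0 : 0 < q) (hq1 : q < 1)
  (A : algType R[i]) (a c ad cd : A) (hA : is_ASUq q a c ad cd)
  (K : {lrmorphism A -> A})
  (Ka : K a = (Num.sqrt q)%:C ^-1 *: a) (Kc : K c = (Num.sqrt q)%:C ^-1 *: c)
  (Kad : K ad = (Num.sqrt q)%:C *: ad) (Kcd : K cd = (Num.sqrt q)%:C *: cd)
  (n m : int) :
  mult_tensor_iso (Lmod q K 0) (Lmod q K n) (Lmod q K m) (Lmod q K (n + m)).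
Proof.
have hs : (Num.sqrt q)%:C != 0 :> R[i].
  have : (Num.sqrt q)%:C != (0:R)%:C :> R[i].
    by rewrite (inj_eq (@complexI R)); apply: lt0r_neq0; rewrite sqrtr_gt0.
  by [].
have [[_ [_ [_ [r1 [r2 _]]]]] _] := hA.
have P1 : Punit q K 1.
  exists [:: (ad, a); (cd, c)]; split; last by rewrite big_cons big_cons big_nil addr0.
  move=> p; rewrite !inE => /orP [] /eqP -> /=; rewrite !memL expr1z exprN1.
    by rewrite Kad Ka !eqxx.
  by rewrite Kcd Kc !eqxx.
have P2 : Punit q K (-1).
  exists [:: (a, ad); ((q%:C ^+ 2) *: c, cd)]; split;
    last by rewrite big_cons big_cons big_nil addr0 -scalerAl.
  move=> p; rewrite !inE => /orP [] /eqP -> /=; rewrite opprK !memL expr1z exprN1.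
    by rewrite Kad Ka !eqxx.
  by rewrite Kcd KZ Kc scalerA mulrC -scalerA !eqxx.
have [r [hr sr]] := Punit_all hs n P1 P2.
move=> W beta bD1 bD2 bB.

have hy : forall p z, p \in r -> z \in Lmod q K (n + m) -> p.2 * z \in Lmod q K m.
  move=> p z hp hz; apply: (LM hs (proj2 (hr p hp)) hz).
  by rewrite addrA addNr add0r.
exists (fun z => \sum_(p <- r) beta p.1 (p.2 * z)). split.
- move=> u v hu hv; rewrite -big_split /=; apply: eq_big_seq => p hp.
  rewrite mulrDr bD2 //; [exact: (proj1 (hr p hp)) | exact: hy | exact: hy].
- move=> x y hx hy'.
  have hxy : x * y \in Lmod q K (n + m) by apply: (LM hs hx hy').
  have hx0 : forall p, p \in r -> p.2 * x \in Lmod q K 0.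
    by move=> p hp; apply: (LM hs (proj2 (hr p hp)) hx); rewrite addNr.
  transitivity (beta (\sum_(p <- r) p.1 * (p.2 * x)) y).
    congr (beta _ y).
    under eq_bigr do rewrite mulrA.
    by rewrite -big_distrl /= sr mul1r.
  rewrite (add_sum (q := q) (K := K) (g := fun u => beta u y) (n := n)).
  + apply: eq_big_seq => p hp; rewrite bB ?mulrA //; [exact: (proj1 (hr p hp)) | exact: hx0].
  + by move=> u v hu hv; rewrite bD1.
  + move=> p hp; apply: (LM hs (proj1 (hr p hp)) (hx0 p hp)); exact: addr0.
- move=> g gD gB u hu.
  transitivity (g (\sum_(p <- r) p.1 * (p.2 * u))).
    congr (g _).
    under eq_bigr do rewrite mulrA.
    by rewrite -big_distrl /= sr mul1r.
  rewrite (add_sum (q := q) (K := K) (g := g) (n := n + m)) //.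
  + apply: eq_big_seq => p hp; rewrite gB //; [exact: (proj1 (hr p hp))| exact: hy].
  + move=> p hp; apply: (LM hs (proj1 (hr p hp)) (hy p u hp hu)).
    by rewrite addrC.
Qed.
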